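(* For $e\in\{0,1\}$ let $d_e,d'_e$ be metrics on $\omega$ and let $g_e:\langle\omega,d_e\rangle\to\langle\omega,d'_e\rangle$ be Cauchy-continuous. The following are equivalent: (1) there is a continuous function $f:\langle X,d_X\rangle\to\langle Y,d_Y\rangle$ between Polish metric spaces which is coded by both $(g_0,d_0,d'_0)$ and $(g_1,d_1,d'_1)$; (2) $(g_0,d_0,d'_0)\approx_{\mathrm{cdi}}(g_1,d_1,d'_1)$.
   Context: A dense isometry is a distance-preserving map (not necessarily onto) with dense image. A function between metric spaces is Cauchy-continuous if it maps Cauchy sequences to Cauchy sequences. Let $\mathcal{C}(\omega)$ be the set of triples $(g,d,d')$ where $d,d'$ are metrics on $\omega$ and $g:\langle\omega,d\rangle\to\langle\omega,d'\rangle$ is Cauchy-continuous. For a continuous $f:\langle X,d_X\rangle\to\langle Y,d_Y\rangle$ between infinite Polish metric spaces and $(g,d,d')\in\mathcal{C}(\omega)$, $(g,d,d')$ codes $f$ if there are dense isometries $\iota:\langle\omega,d\rangle\to\langle X,d_X\rangle$ and $\iota':\langle\omega,d'\rangle\to\langle Y,d_Y\rangle$ with $\iota'\circ g=f\circ\iota$. On $\mathcal{C}(\omega)$: $(g_0,d_0,d'_0)\preceq_{\mathrm{cdi}}(g_1,d_1,d'_1)$ iff there are dense isometries $\iota:\langle\omega,d_0\rangle\to\langle\omega,d_1\rangle$ and $\iota':\langle\omega,d'_0\rangle\to\langle\omega,d'_1\rangle$ with $\iota'\circ g_0=g_1\circ\iota$; and $(g_0,d_0,d'_0)\approx_{\mathrm{cdi}}(g_1,d_1,d'_1)$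 iff there is $(g,d,d')\in\mathcal{C}(\omega)$ with $(g_e,d_e,d'_e)\preceq_{\mathrm{cdi}}(g,d,d')$ for each $e\in\{0,1\}$. *)

(* Defs.v *)
From Stdlib Require Import Reals.
Open Scope R_scope.

Definition is_metric {X : Type} (d : X -> X -> R) : Prop :=
  (forall x y, 0 <= d x y) /\
  (forall x y, d x y = 0 <-> x = y) /\
  (forall x y, d x y = d y x) /\
  (forall x y z, d x z <= d x y + d y z).

Definition cauchy_seq {X : Type} (d : X -> X -> R) (u : nat -> X) : Prop :=
  forall eps, 0 < eps -> exists N : nat, forall m n : nat,
    (N <= m)%nat -> (N <= n)%nat -> d (u m) (u n) < eps.

Definition converges_to {X : Type} (d : X -> X -> R) (u : nat -> X) (x : X) : Prop :=
  forall eps, 0 < eps -> exists N : nat, forall n : nat, (N <= n)%nat -> d (u n) x < eps.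

Definition cauchy_continuous {X Y : Type} (dX : X -> X -> R) (dY : Y -> Y -> R)
  (f : X -> Y) : Prop :=
  forall u : nat -> X, cauchy_seq dX u -> cauchy_seq dY (fun n => f (u n)).

Definition metric_continuous {X Y : Type} (dX : X -> X -> R) (dY : Y -> Y -> R)
  (f : X -> Y) : Prop :=
  forall x eps, 0 < eps -> exists delta, 0 < delta /\
    forall y, dX x y < delta -> dY (f x) (f y) < eps.

Definition complete_metric {X : Type} (d : X -> X -> R) : Prop :=
  forall u : nat -> X, cauchy_seq d u -> exists x, converges_to d u x.

Definition dense_image {A X : Type} (d : X -> X -> R) (h : A -> X) : Prop :=
  forall x eps, 0 < eps -> exists a : A, d x (h a) < eps.

Definition separable_metric {X : Type} (d : X -> X -> R) : Prop :=
  exists s : nat -> X, dense_image d s.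

Definition polish_metric_space (X : Type) (d : X -> X -> R) : Prop :=
  is_metric d /\ complete_metric d /\ separable_metric d.

Definition infinite_type (X : Type) : Prop :=
  exists h : nat -> X, forall m n, h m = h n -> m = n.

Definition isometry {A B : Type} (dA : A -> A -> R) (dB : B -> B -> R) (i : A -> B) : Prop :=
  forall a b, dB (i a) (i b) = dA a b.

Definition dense_isometry {A B : Type} (dA : A -> A -> R) (dB : B -> B -> R) (i : A -> B) : Prop :=
  isometry dA dB i /\ dense_image dB i.

Definition in_C (g : nat -> nat) (d d' : nat -> nat -> R) : Prop :=
  is_metric d /\ is_metric d' /\ cauchy_continuous d d' g.

Definition codes (g : nat -> nat) (d d' : nat -> nat -> R)
  {X Y : Type} (dX : X -> X -> R) (dY : Y -> Y -> R) (f : X -> Y) : Prop :=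
  exists (iota : nat -> X) (iota' : nat -> Y),
    dense_isometry d dX iota /\ dense_isometry d' dY iota' /\
    forall n, iota' (g n) = f (iota n).

Definition preceq_cdi (g0 : nat -> nat) (d0 d0' : nat -> nat -> R)
  (g1 : nat -> nat) (d1 d1' : nat -> nat -> R) : Prop :=
  exists (iota iota' : nat -> nat),
    dense_isometry d0 d1 iota /\ dense_isometry d0' d1' iota' /\
    forall n, iota' (g0 n) = g1 (iota n).

Definition approx_cdi (g0 : nat -> nat) (d0 d0' : nat -> nat -> R)
  (g1 : nat -> nat) (d1 d1' : nat -> nat -> R) : Prop :=
  exists (g : nat -> nat) (d d' : nat -> nat -> R),
    in_C g d d' /\ preceq_cdi g0 d0 d0' g d d' /\ preceq_cdi g1 d1 d1' g d d'.

(* Main.v *)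
Require Import Defs.
From Stdlib Require Import Reals Lra Lia Arith Classical ClassicalEpsilon
  FunctionalExtensionality PropExtensionality ProofIrrelevance.
Open Scope R_scope.

Lemma cv_le_ev (a : nat -> R) l c : Un_cv a l ->
  (exists N, forall n, (N <= n)%nat -> a n <= c) -> l <= c.
Proof.
  intros H [N HN]. destruct (Rle_or_lt l c) as [h|h]; auto.
  destruct (H (l - c)) as [M HM]; [lra|].
  specialize (HM (max N M) (Nat.le_max_r _ _)).
  specialize (HN (max N M) (Nat.le_max_l _ _)).
  unfold Rdist in HM. apply Rabs_def2 in HM. lra.
Qed.

Lemma le_eps x : (forall eps, 0 < eps -> x <= eps) -> x <= 0.
Proof.
  intros H. destruct (Rle_or_lt x 0) as [h|h]; auto.
  specialize (H (x/2)). lra.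
Qed.

Lemma cv_ext (a b : nat -> R) l : (forall n, a n = b n) -> Un_cv a l -> Un_cv b l.
Proof.
  intros E H eps He. destruct (H eps He) as [N HN]. exists N.
  intros n Hn. rewrite <- E. auto.
Qed.

Lemma cv_const c : Un_cv (fun _ => c) c.
Proof.
  intros eps He. exists 0%nat. intros. unfold Rdist.
  replace (c - c) with 0 by ring. rewrite Rabs_R0. lra.
Qed.

Lemma inv_small eps : 0 < eps -> exists N, forall k, (N <= k)%nat -> / INR (S k) < eps.
Proof.
  intros He. destruct (archimed_cor1 eps He) as [N [HN HN0]].
  exists N. intros k Hk. eapply Rle_lt_trans; [|exact HN].
  apply Rinv_le_contravar. apply lt_0_INR; lia. apply le_INR; lia.
Qed.

Lemma fchoice {A B : Type} (P : A -> B -> Prop) :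
  (forall a, exists b, P a b) -> exists F : A -> B, forall a, P a (F a).
Proof.
  intros H. exists (fun a => proj1_sig (constructive_indefinite_description _ (H a))).
  intros a. exact (proj2_sig (constructive_indefinite_description _ (H a))).
Qed.

Lemma sig_eq {A : Type} {P : A -> Prop} (x y : sig P) :
  proj1_sig x = proj1_sig y -> x = y.
Proof.
  destruct x as [x px], y as [y py]; simpl; intros ->. f_equal. apply proof_irrelevance.
Qed.

Lemma metric_tri {X} (d : X -> X -> R) : is_metric d ->
  forall x y z, d x z <= d x y + d y z.
Proof. intros [_ [_ [_ H]]]; auto. Qed.
Lemma metric_sym {X} (d : X -> X -> R) : is_metric d -> forall x y, d x y = d y x.
Proof. intros [_ [_ [H _]]]; auto. Qed.
Lemma metric_pos {X} (d : X -> X -> R) : is_metric d -> forall x y, 0 <= d x y.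
Proof. intros [H _]; auto. Qed.
Lemma metric_0 {X} (d : X -> X -> R) : is_metric d -> forall x, d x x = 0.
Proof. intros [_ [H _]] x. apply H. auto. Qed.
Lemma metric_eq {X} (d : X -> X -> R) : is_metric d -> forall x y, d x y = 0 -> x = y.
Proof. intros [_ [H _]] x y. apply H. Qed.

Lemma cs_dist_cauchy (d : nat -> nat -> R) (u v : nat -> nat) : is_metric d -> cauchy_seq d u -> cauchy_seq d v ->
  Cauchy_crit (fun n => d (u n) (v n)).
Proof.
  intros Hd Hu Hv eps He.
  destruct (Hu (eps/2)) as [N1 H1]; [lra|].
  destruct (Hv (eps/2)) as [N2 H2]; [lra|].
  exists (max N1 N2). intros n m Hn Hm. unfold Rdist.
  assert (a1 := H1 n m ltac:(lia) ltac:(lia)).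
  assert (a2 := H2 n m ltac:(lia) ltac:(lia)).
  assert (t1 := metric_tri d Hd (u n) (u m) (v n)).
  assert (t2 := metric_tri d Hd (u m) (v m) (v n)).
  assert (t3 := metric_tri d Hd (u m) (u n) (v m)).
  assert (t4 := metric_tri d Hd (u n) (v n) (v m)).
  rewrite (metric_sym d Hd (v m) (v n)) in t2.
  rewrite (metric_sym d Hd (u m) (u n)) in t3.
  apply Rabs_def1; lra.
Qed.

Definition Dl (d : nat -> nat -> R) (u v : nat -> nat) : R :=
  epsilon (inhabits 0) (fun l => Un_cv (fun n => d (u n) (v n)) l).

Lemma Dl_cv (d : nat -> nat -> R) u v : is_metric d -> cauchy_seq d u -> cauchy_seq d v ->
  Un_cv (fun n => d (u n) (v n)) (Dl d u v).
Proof.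
  intros Hd Hu Hv. unfold Dl. apply epsilon_spec.
  destruct (R_complete _ (cs_dist_cauchy d u v Hd Hu Hv)) as [l Hl]. eauto.
Qed.

Lemma Dl_eq (d : nat -> nat -> R) u v l : is_metric d -> cauchy_seq d u -> cauchy_seq d v ->
  Un_cv (fun n => d (u n) (v n)) l -> Dl d u v = l.
Proof. intros. eapply UL_sequence; [apply Dl_cv|]; eauto. Qed.

Lemma Dl_pos (d : nat -> nat -> R) u v : is_metric d -> cauchy_seq d u -> cauchy_seq d v -> 0 <= Dl d u v.
Proof.
  intros. eapply (Rle_cv_lim (Un := fun _ => 0)); [|apply cv_const|apply Dl_cv; auto].
  intros; apply metric_pos; auto.
Qed.

Lemma Dl_sym (d : nat -> nat -> R) u v : is_metric d -> cauchy_seq d u -> cauchy_seq d v -> Dl d u v = Dl d v u.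
Proof.
  intros. apply Dl_eq; auto. eapply cv_ext; [|apply Dl_cv; eauto].
  intros; apply metric_sym; auto.
Qed.

Lemma Dl_tri (d : nat -> nat -> R) u v w : is_metric d -> cauchy_seq d u -> cauchy_seq d v -> cauchy_seq d w ->
  Dl d u w <= Dl d u v + Dl d v w.
Proof.
  intros. eapply Rle_cv_lim; [| apply Dl_cv; auto | apply CV_plus; apply Dl_cv; auto].
  intros; simpl; apply metric_tri; auto.
Qed.

Lemma Dl_refl (d : nat -> nat -> R) u : is_metric d -> cauchy_seq d u -> Dl d u u = 0.
Proof.
  intros. apply Dl_eq; auto. eapply cv_ext; [|apply cv_const].
  intros; simpl; rewrite metric_0; auto.
Qed.

Lemma cs_const (d : nat -> nat -> R) (a : nat) : is_metric d -> cauchy_seq d (fun _ => a).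
Proof. intros Hd eps He. exists 0%nat. intros. rewrite metric_0; auto. Qed.

Lemma Dl_const (d : nat -> nat -> R) a b : is_metric d -> Dl d (fun _ => a) (fun _ => b) = d a b.
Proof. intros. apply Dl_eq; auto using cs_const. apply cv_const. Qed.

Definition cls_pred (d : nat -> nat -> R) (u : nat -> nat) : (nat -> nat) -> Prop :=
  fun v => cauchy_seq d v /\ Dl d u v = 0.

Definition Cpl (d : nat -> nat -> R) : Type :=
  {P : (nat -> nat) -> Prop | exists u, cauchy_seq d u /\ P = cls_pred d u}.

Definition cls (d : nat -> nat -> R) (u : nat -> nat) (H : cauchy_seq d u) : Cpl d :=
  exist _ (cls_pred d u) (ex_intro _ u (conj H eq_refl)).

Definition rep (d : nat -> nat -> R) (P : Cpl d) : nat -> nat :=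
  proj1_sig (constructive_indefinite_description _ (proj2_sig P)).

Lemma rep_spec (d : nat -> nat -> R) (P : Cpl d) :
  cauchy_seq d (rep d P) /\ proj1_sig P = cls_pred d (rep d P).
Proof. unfold rep. exact (proj2_sig (constructive_indefinite_description _ (proj2_sig P))). Qed.

Lemma rep_cs (d : nat -> nat -> R) (P : Cpl d) : cauchy_seq d (rep d P).
Proof. apply rep_spec. Qed.

Lemma cls_pred_eq (d : nat -> nat -> R) u v : is_metric d -> cauchy_seq d u -> cauchy_seq d v ->
  Dl d u v = 0 -> cls_pred d u = cls_pred d v.
Proof.
  intros Hd Hu Hv E. apply functional_extensionality. intros w.
  apply propositional_extensionality. unfold cls_pred; split; intros [Hw Z]; split; auto.
  - assert (a := Dl_tri d v u w Hd Hv Hu Hw). rewrite (Dl_sym d v u) in a; auto.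
    assert (b := Dl_pos d v w Hd Hv Hw). lra.
  - assert (a := Dl_tri d u v w Hd Hu Hv Hw).
    assert (b := Dl_pos d u w Hd Hu Hw). lra.
Qed.

Lemma cls_eq (d : nat -> nat -> R) u v Hu Hv : is_metric d -> Dl d u v = 0 -> cls d u Hu = cls d v Hv.
Proof. intros Hd E. apply sig_eq. simpl. apply cls_pred_eq; auto. Qed.

Lemma cls_rep (d : nat -> nat -> R) (P : Cpl d) : P = cls d (rep d P) (rep_cs d P).
Proof. apply sig_eq. simpl. apply rep_spec. Qed.

Lemma rep_cls (d : nat -> nat -> R) u Hu : is_metric d -> Dl d (rep d (cls d u Hu)) u = 0.
Proof.
  intros Hd. destruct (rep_spec d (cls d u Hu)) as [Hr E]. simpl in E.
  assert (h : cls_pred d u u) by (split; auto; apply Dl_refl; auto).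
  rewrite E in h. apply h.
Qed.

Definition dC (d : nat -> nat -> R) (P Q : Cpl d) : R := Dl d (rep d P) (rep d Q).

Lemma dC_cls (d : nat -> nat -> R) u v Hu Hv : is_metric d ->
  dC d (cls d u Hu) (cls d v Hv) = Dl d u v.
Proof.
  intros Hd. unfold dC.
  set (r1 := rep d (cls d u Hu)). set (r2 := rep d (cls d v Hv)).
  assert (h1 : Dl d r1 u = 0) by apply rep_cls, Hd.
  assert (h2 : Dl d r2 v = 0) by apply rep_cls, Hd.
  assert (c1 : cauchy_seq d r1) by apply rep_cs.
  assert (c2 : cauchy_seq d r2) by apply rep_cs.
  assert (a1 := Dl_tri d r1 u r2 Hd c1 Hu c2).
  assert (a2 := Dl_tri d u v r2 Hd Hu Hv c2).
  assert (a3 := Dl_tri d u r1 v Hd Hu c1 Hv).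
  assert (a4 := Dl_tri d r1 r2 v Hd c1 c2 Hv).
  rewrite (Dl_sym d v r2) in a2; auto. rewrite (Dl_sym d u r1) in a3; auto.
  lra.
Qed.

Lemma dC_metric (d : nat -> nat -> R) : is_metric d -> is_metric (dC d).
Proof.
  intros Hd. unfold dC. split; [|split; [|split]].
  - intros; apply Dl_pos; auto using rep_cs.
  - intros P Q; split.
    + intros E. rewrite (cls_rep d P), (cls_rep d Q). apply cls_eq; auto.
    + intros ->. apply Dl_refl; auto using rep_cs.
  - intros; apply Dl_sym; auto using rep_cs.
  - intros; apply Dl_tri; auto using rep_cs.
Qed.

Definition jC (d : nat -> nat -> R) (Hd : is_metric d) (a : nat) : Cpl d :=
  cls d (fun _ => a) (cs_const d a Hd).

Lemma jC_iso (d : nat -> nat -> R) Hd a b : dC d (jC d Hd a) (jC d Hd b) = d a b.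
Proof. unfold jC. rewrite dC_cls; auto. apply Dl_const; auto. Qed.

Lemma approx (d : nat -> nat -> R) Hd u Hu eps : 0 < eps ->
  exists N, forall k, (N <= k)%nat -> dC d (jC d Hd (u k)) (cls d u Hu) < eps.
Proof.
  intros He. destruct (Hu (eps/2)) as [N HN]; [lra|]. exists N. intros k Hk.
  unfold jC. rewrite dC_cls; auto.
  enough (Dl d (fun _ => u k) u <= eps/2) by lra.
  eapply cv_le_ev; [apply Dl_cv; auto using cs_const|].
  exists N. intros n Hn. left. apply HN; auto.
Qed.

Lemma jC_dense (d : nat -> nat -> R) Hd : dense_image (dC d) (jC d Hd).
Proof.
  intros P eps He. rewrite (cls_rep d P).
  destruct (approx d Hd _ (rep_cs d P) eps He) as [N HN].
  exists (rep d P N). rewrite (metric_sym _ (dC_metric d Hd)). apply HN. lia.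
Qed.

Lemma jC_inj (d : nat -> nat -> R) Hd a b : jC d Hd a = jC d Hd b -> a = b.
Proof.
  intros E. apply (metric_eq d Hd). rewrite <- jC_iso with (Hd := Hd), E.
  apply metric_0, dC_metric, Hd.
Qed.

Lemma dC_complete (d : nat -> nat -> R) (Hd : is_metric d) : complete_metric (dC d).
Proof.
  intros xs Hxs.
  assert (HM := dC_metric d Hd).
  assert (Hex : forall k, exists a, dC d (xs k) (jC d Hd a) < / INR (S k)).
  { intros k. apply jC_dense. apply Rinv_0_lt_compat, lt_0_INR. lia. }
  destruct (fchoice _ Hex) as [m Hm].
  assert (Hcm : cauchy_seq d m).
  { intros eps He.
    destruct (inv_small (eps/3)) as [N0 HN0]; [lra|].
    destruct (Hxs (eps/3)) as [N1 HN1]; [lra|].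
    exists (max N0 N1). intros k l Hk Hl.
    rewrite <- (jC_iso d Hd).
    assert (t1 := metric_tri _ HM (jC d Hd (m k)) (xs k) (jC d Hd (m l))).
    assert (t2 := metric_tri _ HM (xs k) (xs l) (jC d Hd (m l))).
    rewrite (metric_sym _ HM (jC d Hd (m k)) (xs k)) in t1.
    assert (a1 := Hm k). assert (a2 := Hm l).
    assert (b1 := HN0 k ltac:(lia)). assert (b2 := HN0 l ltac:(lia)).
    assert (c := HN1 k l ltac:(lia) ltac:(lia)). lra. }
  exists (cls d m Hcm). intros eps He.
  destruct (inv_small (eps/2)) as [N0 HN0]; [lra|].
  destruct (approx d Hd m Hcm (eps/2)) as [N1 HN1]; [lra|].
  exists (max N0 N1). intros n Hn.
  assert (t := metric_tri _ HM (xs n) (jC d Hd (m n)) (cls d m Hcm)).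
  assert (a := Hm n). assert (b := HN0 n ltac:(lia)). assert (c := HN1 n ltac:(lia)).
  lra.
Qed.

Lemma Cpl_polish (d : nat -> nat -> R) (Hd : is_metric d) : polish_metric_space (Cpl d) (dC d).
Proof.
  split; [apply dC_metric; auto|split; [apply dC_complete; auto|]].
  exists (jC d Hd). apply jC_dense.
Qed.

Lemma Cpl_infinite (d : nat -> nat -> R) (Hd : is_metric d) : infinite_type (Cpl d).
Proof. exists (jC d Hd). apply jC_inj. Qed.

Definition inter {X : Type} (u v : nat -> X) (n : nat) : X :=
  if Nat.even n then u (Nat.div2 n) else v (Nat.div2 n).

Lemma inter_even {X} (u v : nat -> X) n : inter u v (2 * n) = u n.
Proof. unfold inter. rewrite Nat.even_even, Nat.div2_double. auto. Qed.
Lemma inter_odd {X} (u v : nat -> X) n : inter u v (2 * n + 1) = v n.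
Proof. unfold inter. rewrite Nat.even_odd, Nat.div2_odd'. auto. Qed.

Lemma inter_conv {X} (dX : X -> X -> R) (u v : nat -> X) P :
  converges_to dX u P -> converges_to dX v P -> converges_to dX (inter u v) P.
Proof.
  intros Hu Hv eps He. destruct (Hu eps He) as [N1 H1]. destruct (Hv eps He) as [N2 H2].
  exists (2 * max N1 N2)%nat. intros n Hn.
  assert (h : (max N1 N2 <= Nat.div2 n)%nat) by (apply Nat.div2_le_lower_bound; lia).
  unfold inter. destruct (Nat.even n); [apply H1|apply H2]; lia.
Qed.

Lemma conv_cauchy {X} (d : nat -> nat -> R) (dX : X -> X -> R) (j : nat -> X) w P :
  is_metric dX -> isometry d dX j -> converges_to dX (fun k => j (w k)) P -> cauchy_seq d w.
Proof.
  intros HX Hj Hc eps He. destruct (Hc (eps/2)) as [N HN]; [lra|].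
  exists N. intros m n Hm Hn. rewrite <- Hj.
  assert (t := metric_tri _ HX (j (w m)) P (j (w n))).
  rewrite (metric_sym _ HX P (j (w n))) in t.
  assert (a := HN m Hm). assert (b := HN n Hn). lra.
Qed.

Lemma jC_isom (d : nat -> nat -> R) Hd : isometry d (dC d) (jC d Hd).
Proof. intros a b. apply jC_iso. Qed.

Lemma approx_conv (d : nat -> nat -> R) Hd u Hu :
  converges_to (dC d) (fun k => jC d Hd (u k)) (cls d u Hu).
Proof. intros eps He. apply approx; auto. Qed.

Lemma conv_unique {X} (dX : X -> X -> R) (u : nat -> X) P Q :
  is_metric dX -> converges_to dX u P -> converges_to dX u Q -> P = Q.
Proof.
  intros HX HP HQ. apply (metric_eq _ HX).
  apply Rle_antisym; [|apply metric_pos; auto].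
  apply le_eps. intros eps He.
  destruct (HP (eps/2)) as [N1 H1]; [lra|]. destruct (HQ (eps/2)) as [N2 H2]; [lra|].
  assert (t := metric_tri _ HX P (u (max N1 N2)) Q).
  rewrite (metric_sym _ HX P (u (max N1 N2))) in t.
  assert (a := H1 (max N1 N2) ltac:(lia)). assert (b := H2 (max N1 N2) ltac:(lia)). lra.
Qed.

Lemma wd (d d' : nat -> nat -> R) (Hd : is_metric d) (Hd' : is_metric d') g
  (Hg : cauchy_continuous d d' g) u v (Hu : cauchy_seq d u) (Hv : cauchy_seq d v) :
  Dl d u v = 0 -> Dl d' (fun n => g (u n)) (fun n => g (v n)) = 0.
Proof.
  intros E.
  assert (Hc : converges_to (dC d) (fun k => jC d Hd (inter u v k)) (cls d u Hu)).
  { assert (h : (fun k => jC d Hd (inter u v k)) =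
                inter (fun k => jC d Hd (u k)) (fun k => jC d Hd (v k))).
    { apply functional_extensionality; intros k; unfold inter; destruct (Nat.even k); auto. }
    rewrite h. apply inter_conv. apply approx_conv.
    rewrite (cls_eq d u v Hu Hv Hd E). apply approx_conv. }
  assert (Hw := conv_cauchy _ _ _ _ _ (dC_metric d Hd) (jC_isom d Hd) Hc).
  assert (Hgw := Hg _ Hw).
  apply Rle_antisym; [|apply Dl_pos; auto].
  apply le_eps. intros eps He.
  eapply cv_le_ev. apply Dl_cv; auto.
  destruct (Hgw eps He) as [N HN]. exists N. intros n Hn.
  left. assert (h := HN (2 * n)%nat (2 * n + 1)%nat ltac:(lia) ltac:(lia)).
  rewrite inter_even, inter_odd in h. exact h.
Qed.

Definition fC (d d' : nat -> nat -> R) g (Hg : cauchy_continuous d d' g) (P : Cpl d) : Cpl d' :=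
  cls d' (fun n => g (rep d P n)) (Hg _ (rep_cs d P)).

Lemma fC_cls (d d' : nat -> nat -> R) (Hd : is_metric d) (Hd' : is_metric d') g Hg u Hu :
  fC d d' g Hg (cls d u Hu) = cls d' (fun n => g (u n)) (Hg u Hu).
Proof.
  unfold fC. apply cls_eq; auto. apply (wd d d' Hd Hd' g Hg _ _ (rep_cs d _) Hu). apply rep_cls; auto.
Qed.

Lemma fC_j (d d' : nat -> nat -> R) (Hd : is_metric d) (Hd' : is_metric d') g Hg a :
  fC d d' g Hg (jC d Hd a) = jC d' Hd' (g a).
Proof.
  unfold jC at 1. rewrite fC_cls; auto. unfold jC. apply cls_eq; auto.
  apply (Dl_refl d' (fun _ => g a)); auto. apply cs_const; auto.
Qed.

Lemma seq_f (d d' : nat -> nat -> R) (Hd : is_metric d) (Hd' : is_metric d') g Hg w P :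
  converges_to (dC d) (fun k => jC d Hd (w k)) P ->
  converges_to (dC d') (fun k => jC d' Hd' (g (w k))) (fC d d' g Hg P).
Proof.
  intros Hc.
  assert (Hw := conv_cauchy _ _ _ _ _ (dC_metric d Hd) (jC_isom d Hd) Hc).
  assert (E : cls d w Hw = P).
  { eapply conv_unique; [apply dC_metric; auto| apply approx_conv | exact Hc]. }
  rewrite <- E. rewrite fC_cls; auto. apply approx_conv.
Qed.

Lemma fC_cont (d d' : nat -> nat -> R) (Hd : is_metric d) (Hd' : is_metric d') g Hg :
  metric_continuous (dC d) (dC d') (fC d d' g Hg).
Proof.
  intros P eps He.
  assert (HM := dC_metric d Hd). assert (HM' := dC_metric d' Hd').
  destruct (classic (exists delta, 0 < delta /\ forall Q, dC d P Q < delta ->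
     dC d' (fC d d' g Hg P) (fC d d' g Hg Q) < eps)) as [H|H]; auto.
  exfalso.
  assert (H1 : forall delta, 0 < delta -> exists Q, dC d P Q < delta /\
     eps <= dC d' (fC d d' g Hg P) (fC d d' g Hg Q)).
  { intros delta Hdl. apply NNPP. intros Hn. apply H. exists delta. split; auto.
    intros Q HQ. apply NNPP. intros Hq. apply Hn. exists Q. split; auto. lra. }
  assert (H2 : forall k, exists a, dC d (jC d Hd a) P < 2 * / INR (S k) /\
     eps / 2 <= dC d' (jC d' Hd' (g a)) (fC d d' g Hg P)).
  { intros k. assert (hk : 0 < / INR (S k)) by (apply Rinv_0_lt_compat, lt_0_INR; lia).
    destruct (H1 _ hk) as [Q [HQ1 HQ2]].
    set (v := rep d Q). pose (Hv := rep_cs d Q : cauchy_seq d v).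
    assert (EQ : Q = cls d v Hv) by (rewrite (cls_rep d Q) at 1; apply sig_eq; reflexivity).
    destruct (approx d Hd v Hv _ hk) as [N1 HN1].
    destruct (approx d' Hd' (fun n => g (v n)) (Hg v Hv) (eps/2)) as [N2 HN2]; [lra|].
    exists (v (max N1 N2)).
    assert (a1 := HN1 (max N1 N2) ltac:(lia)).
    assert (a2 := HN2 (max N1 N2) ltac:(lia)). simpl in a2.
    change (cls d' (fun n => g (v n)) (Hg v Hv)) with (fC d d' g Hg Q) in a2.
    rewrite <- EQ in a1.
    split.
    - assert (t := metric_tri _ HM (jC d Hd (v (max N1 N2))) Q P).
      rewrite (metric_sym _ HM Q P) in t. lra.
    - assert (t := metric_tri _ HM' (fC d d' g Hg P) (jC d' Hd' (g (v (max N1 N2)))) (fC d d' g Hg Q)).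
      rewrite (metric_sym _ HM' (fC d d' g Hg P) (jC d' Hd' _)) in t. lra. }
  destruct (fchoice _ H2) as [m Hm].
  assert (Hc : converges_to (dC d) (fun k => jC d Hd (m k)) P).
  { intros e He'. destruct (inv_small (e/2)) as [N HN]; [lra|]. exists N. intros n Hn.
    destruct (Hm n) as [h _]. assert (hh := HN n Hn). lra. }
  destruct (seq_f d d' Hd Hd' g Hg m P Hc (eps/2)) as [N HN]; [lra|].
  destruct (Hm N) as [_ h]. assert (hh := HN N ltac:(lia)). lra.
Qed.

Lemma comp_dense_iso {A B Z : Type} (dA : A -> A -> R) (dB : B -> B -> R) (dZ : Z -> Z -> R)
  i j : is_metric dZ -> dense_isometry dA dB i -> dense_isometry dB dZ j ->
  dense_isometry dA dZ (fun n => j (i n)).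
Proof.
  intros HZ [Hi Hid] [Hj Hjd]. split.
  - intros a b. rewrite Hj. apply Hi.
  - intros z eps He. destruct (Hjd z (eps/2)) as [b Hb]; [lra|].
    destruct (Hid b (eps/2)) as [a Ha]; [lra|]. exists a.
    assert (t := metric_tri _ HZ z (j b) (j (i a))). rewrite Hj in t. lra.
Qed.

Lemma least (P : nat -> Prop) : (exists n, P n) -> exists n, P n /\ forall m, (m < n)%nat -> ~ P m.
Proof.
  intros [n Hn]. apply NNPP. intros H.
  assert (forall k, forall m, (m <= k)%nat -> ~ P m).
  { induction k; intros m Hm Pm.
    - apply H. exists m. split; auto. intros; lia.
    - destruct (Nat.eq_dec m (S k)).
      + subst. apply H. exists (S k). split; auto. intros m' Hm'. apply IHk. lia.
      + apply (IHk m); auto. lia. }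
  apply (H0 n n); auto.
Qed.

Lemma enum_lemma {X : Type} (h k : nat -> X) :
  (forall m n, k m = k n -> m = n) -> (forall n, exists i, h i = k n) ->
  exists e : nat -> X, (forall a b, e a = e b -> a = b) /\ (forall i, exists n, e n = h i).
Proof.
  intros Hk Hc.
  set (S0 := fun i => forall j, (j < i)%nat -> h j <> h i).
  assert (ClA : forall m, exists N, forall n, (N <= n)%nat -> forall j, (j < m)%nat -> k n <> h j).
  { induction m.
    - exists 0%nat. intros; lia.
    - destruct IHm as [N HN].
      destruct (classic (exists n0, k n0 = h m)) as [[n0 Hn0]|Hno].
      + exists (max N (S n0)). intros n Hn j Hj E.
        destruct (Nat.eq_dec j m).
        * subst. rewrite <- Hn0 in E. apply Hk in E. lia.
        * apply (HN n ltac:(lia) j ltac:(lia) E).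
      + exists N. intros n Hn j Hj E.
        destruct (Nat.eq_dec j m).
        * subst. apply Hno; eauto.
        * apply (HN n ltac:(lia) j ltac:(lia) E). }
  assert (minfresh : forall i, exists i0, h i0 = h i /\ S0 i0 /\ (i0 <= i)%nat).
  { intros i. destruct (least (fun i0 => h i0 = h i)) as [i0 [H1 H2]]; [eauto|].
    exists i0. split; auto. split.
    - intros j Hj E. apply (H2 j Hj). congruence.
    - destruct (Nat.le_gt_cases i0 i); auto. exfalso. apply (H2 i); auto. }
  assert (Inf : forall m, exists i, (m <= i)%nat /\ S0 i).
  { intros m. destruct (ClA m) as [N HN]. destruct (Hc N) as [i Hi].
    destruct (minfresh i) as [i0 [E [Fi _]]]. exists i0. split; auto.
    destruct (Nat.le_gt_cases m i0); auto. exfalso.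
    apply (HN N (le_n _) i0); auto. congruence. }
  assert (Hnxt : forall m, exists i, ((m <= i)%nat /\ S0 i) /\
     forall i', (i' < i)%nat -> ~ ((m <= i')%nat /\ S0 i')).
  { intros m. apply least. apply Inf. }
  destruct (fchoice _ Hnxt) as [nxt Hn].
  set (s := fix s (n : nat) : nat := match n with O => nxt 0%nat | S n' => nxt (S (s n')) end).
  assert (sS : forall n, s (S n) = nxt (S (s n))) by reflexivity.
  assert (s0 : s 0%nat = nxt 0%nat) by reflexivity.
  assert (sF : forall n, S0 (s n)).
  { intros [|n]; [rewrite s0|rewrite sS]; apply Hn. }
  assert (sI : forall n, (s n < s (S n))%nat).
  { intros n. rewrite sS. destruct (Hn (S (s n))) as [[a _] _]. lia. }
  assert (sM : forall a b, (a < b)%nat -> (s a < s b)%nat).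
  { intros a b Hab. induction Hab.
    - apply sI.
    - specialize (sI m). lia. }
  assert (sG : forall n, (n <= s n)%nat).
  { induction n; [lia|]. specialize (sI n). lia. }
  exists (fun n => h (s n)). split.
  - intros a b E. destruct (Nat.lt_total a b) as [l|[l|l]]; auto.
    + exfalso. apply (sF b (s a) (sM _ _ l)). auto.
    + exfalso. apply (sF a (s b) (sM _ _ l)). auto.
  - intros i. destruct (minfresh i) as [i0 [E [Fi _]]].
    destruct (least (fun n => (i0 <= s n)%nat)) as [n [H1 H2]]; [exists i0; apply sG|].
    exists n. rewrite <- E. f_equal.
    destruct n as [|n'].
    + rewrite s0 in *. destruct (Hn 0%nat) as [_ Hmin].
      destruct (Nat.le_gt_cases (nxt 0%nat) i0) as [l|l]; [lia|].
      exfalso. apply (Hmin i0 l). split; auto. lia.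
    + assert (h2 := H2 n' ltac:(lia)).
      rewrite sS in *. destruct (Hn (S (s n'))) as [_ Hmin].
      destruct (Nat.le_gt_cases (nxt (S (s n'))) i0) as [l|l]; [lia|].
      exfalso. apply (Hmin i0 l). split; auto. lia.
Qed.

Lemma pullback_metric {X : Type} (dX : X -> X -> R) (e : nat -> X) :
  is_metric dX -> (forall a b, e a = e b -> a = b) -> is_metric (fun a b => dX (e a) (e b)).
Proof.
  intros HX He. split; [|split; [|split]].
  - intros; apply metric_pos; auto.
  - intros a b; split.
    + intros E. apply He, (metric_eq _ HX); auto.
    + intros ->. apply metric_0; auto.
  - intros; apply metric_sym; auto.
  - intros; apply metric_tri; auto.
Qed.

Lemma iso_inj {X : Type} (d : nat -> nat -> R) (dX : X -> X -> R) (i : nat -> X) :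
  is_metric d -> isometry d dX i -> forall a b, i a = i b -> a = b.
Proof.
  intros Hd Hi a b E. apply (metric_eq d Hd). rewrite <- Hi, E.
  rewrite Hi. apply metric_0; auto.
Qed.

Lemma pull_cc {X Y : Type} (dX : X -> X -> R) (dY : Y -> Y -> R) f (e : nat -> X) (e' : nat -> Y) (g : nat -> nat) :
  is_metric dX -> is_metric dY -> complete_metric dX -> metric_continuous dX dY f ->
  (forall n, e' (g n) = f (e n)) ->
  cauchy_continuous (fun a b => dX (e a) (e b)) (fun a b => dY (e' a) (e' b)) g.
Proof.
  intros HX HY Hc Hf Hg u Hu.
  destruct (Hc (fun n => e (u n)) Hu) as [x Hx].
  intros eps He. destruct (Hf x (eps/2)) as [dl [Hdl H]]; [lra|].
  destruct (Hx dl Hdl) as [N HN]. exists N. intros m n Hm Hn.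
  rewrite !Hg.
  assert (a := H _ (ltac:(rewrite (metric_sym _ HX); apply HN; auto) : dX x (e (u m)) < dl)).
  assert (b := H _ (ltac:(rewrite (metric_sym _ HX); apply HN; auto) : dX x (e (u n)) < dl)).
  assert (t := metric_tri _ HY (f (e (u m))) (f x) (f (e (u n)))).
  rewrite (metric_sym _ HY (f (e (u m))) (f x)) in t. lra.
Qed.

Lemma pre_lemma {X Y : Type} (dX : X -> X -> R) (dY : Y -> Y -> R) f
  (g0 : nat -> nat) (d0 d0' : nat -> nat -> R) (i : nat -> X) (i' : nat -> Y) (e : nat -> X) (e' : nat -> Y) (g : nat -> nat) :
  (forall a b, e' a = e' b -> a = b) ->
  dense_isometry d0 dX i -> dense_isometry d0' dY i' ->
  (forall n, i' (g0 n) = f (i n)) ->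
  (forall n, exists k, e k = i n) -> (forall n, exists k, e' k = i' n) ->
  (forall n, e' (g n) = f (e n)) ->
  preceq_cdi g0 d0 d0' g (fun a b => dX (e a) (e b)) (fun a b => dY (e' a) (e' b)).
Proof.
  intros He' [Hi Hid] [Hi' Hid'] Hc Hce Hce' Hg.
  destruct (fchoice _ Hce) as [F HF]. destruct (fchoice _ Hce') as [F' HF'].
  exists F, F'. split; [|split].
  - split.
    + intros a b. rewrite !HF. apply Hi.
    + intros m eps Heps. destruct (Hid (e m) eps Heps) as [n Hn]. exists n. rewrite HF. auto.
  - split.
    + intros a b. rewrite !HF'. apply Hi'.
    + intros m eps Heps. destruct (Hid' (e' m) eps Heps) as [n Hn]. exists n. rewrite HF'. auto.
  - intros n. apply He'. rewrite HF', Hg, HF. apply Hc.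
Qed.

Theorem lemma4p5 (g0 : nat -> nat) (d0 d0' : nat -> nat -> R)
  (g1 : nat -> nat) (d1 d1' : nat -> nat -> R) :
  in_C g0 d0 d0' -> in_C g1 d1 d1' ->
  ((exists (X Y : Type) (dX : X -> X -> R) (dY : Y -> Y -> R) (f : X -> Y),
      polish_metric_space X dX /\ infinite_type X /\
      polish_metric_space Y dY /\ infinite_type Y /\
      metric_continuous dX dY f /\
      codes g0 d0 d0' dX dY f /\ codes g1 d1 d1' dX dY f)
   <-> approx_cdi g0 d0 d0' g1 d1 d1').
Proof.
  intros [Hd0 [Hd0' Hg0]] [Hd1 [Hd1' Hg1]]. split.
  - intros [X [Y [dX [dY [f [[HX [HXc _]] [_ [[HY [HYc _]] [_ [Hf
       [[i0 [i0' [Hi0 [Hi0' Hc0]]]] [i1 [i1' [Hi1 [Hi1' Hc1]]]]]]]]]]]]]]].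
    assert (Ii0 := iso_inj _ _ _ Hd0 (proj1 Hi0)).
    assert (Ii0' := iso_inj _ _ _ Hd0' (proj1 Hi0')).
    destruct (enum_lemma (inter i0 i1) i0 Ii0) as [e [He Hec]].
    { intros n. exists (2 * n)%nat. apply inter_even. }
    destruct (enum_lemma (inter (inter i0' i1') (fun n => f (e n))) i0' Ii0') as [e' [He' He'c]].
    { intros n. exists (2 * (2 * n))%nat. rewrite !inter_even. auto. }
    assert (Hgx : forall n, exists k, e' k = f (e n)).
    { intros n. destruct (He'c (2 * n + 1)%nat) as [k Hk]. exists k. rewrite Hk, inter_odd. auto. }
    destruct (fchoice _ Hgx) as [g Hg].
    exists g, (fun a b => dX (e a) (e b)), (fun a b => dY (e' a) (e' b)).
    split; [|split].
    + split; [apply pullback_metric; auto|split; [apply pullback_metric; auto|]].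
      apply (pull_cc dX dY f); auto.
    + eapply pre_lemma; eauto.
      * intros n. destruct (Hec (2 * n)%nat) as [k Hk]. exists k. rewrite Hk, inter_even. auto.
      * intros n. destruct (He'c (2 * (2 * n))%nat) as [k Hk]. exists k. rewrite Hk, !inter_even. auto.
    + eapply pre_lemma; eauto.
      * intros n. destruct (Hec (2 * n + 1)%nat) as [k Hk]. exists k. rewrite Hk, inter_odd. auto.
      * intros n. destruct (He'c (2 * (2 * n + 1))%nat) as [k Hk]. exists k.
        rewrite Hk, inter_even, inter_odd. auto.
  - intros [g [d [d' [[Hd [Hd' Hg]] [[j0 [j0' [Hj0 [Hj0' Hc0]]]] [j1 [j1' [Hj1 [Hj1' Hc1]]]]]]]]].
    assert (DJ : dense_isometry d (dC d) (jC d Hd)) by (split; [apply jC_isom|apply jC_dense]).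
    assert (DJ' : dense_isometry d' (dC d') (jC d' Hd')) by (split; [apply jC_isom|apply jC_dense]).
    exists (Cpl d), (Cpl d'), (dC d), (dC d'), (fC d d' g Hg).
    split; [apply Cpl_polish; auto|].
    split; [apply Cpl_infinite; auto|].
    split; [apply Cpl_polish; auto|].
    split; [apply Cpl_infinite; auto|].
    split; [apply (fC_cont d d' Hd Hd')|].
    split.
    + exists (fun n => jC d Hd (j0 n)), (fun n => jC d' Hd' (j0' n)).
      split; [eapply comp_dense_iso; eauto; apply dC_metric; auto|].
      split; [eapply comp_dense_iso; eauto; apply dC_metric; auto|].
      intros n. rewrite Hc0, (fC_j d d' Hd Hd'); auto.
    + exists (fun n => jC d Hd (j1 n)), (fun n => jC d' Hd' (j1' n)).
      split; [eapply comp_dense_iso; eauto; apply dC_metric; auto|].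
      split; [eapply comp_dense_iso; eauto; apply dC_metric; auto|].
      intros n. rewrite Hc1, (fC_j d d' Hd Hd'); auto.
Qed.
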